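(* Consider the two-layer multi-item order fulfillment problem described in the context with a single FDC ($K=1$), time-invariant variable costs, and given fixed costs $f_0\ge0$, $f_1>0$. Then every online fulfillment policy $\mathrm{ALG}$ (deterministic or randomized) satisfies \[\mathfrak R_{\mathrm{inv}}(\mathrm{ALG})\ge\max\left\{1+\frac{f_0}{f_1},\ \frac54\right\}.\]
   Context: Problem with one FDC (index $1$) and one RDC (index $0$, unlimited inventory). The FDC initially holds $I_{1,0}^i\ge0$ units of item $i$, never replenished. In periods $t=1,\dots,T$ an order $\boldsymbol S_t=(S_t^i)_i$ of nonnegative integers arrives; the policy must immediately and irrevocably choose $m_{0,t}^i,m_{1,t}^i\ge0$ with $m_{0,t}^i+m_{1,t}^i=S_t^i$ and $m_{1,t}^i\le I_{1,t-1}^i$, $I_{1,t}^i=I_{1,0}^i-\sum_{\tau\le t}m_{1,\tau}^i$. Period cost $\sum_{k=0,1}[f_k\mathbb{I}(\sum_im_{k,t}^i>0)+\sum_ic_k^im_{k,t}^i]$; total cost is the sum. An online policy (possibly randomized) decides in period $t$ using only fixed costs, initial inventories, the variable costs and orders up to $t$. $\mathfrak R_{\mathrm{inv}}(\mathrm{ALG})$ is the supremum of $\mathrm{ALG}(I)/\mathrm{OPT}(I)$ ((expected) policy cost over offline optimal cost) over all numbers of items, horizons, initial inventories, nonnegative time-invariant variable costs $c_{k,t}^i=c_k^i$ and order sequences. *)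

(* Defs.v *)
From mathcomp Require Import all_boot all_order all_algebra.
From mathcomp Require Import boolp classical_sets reals.
Set Implicit Arguments. Unset Strict Implicit. Unset Printing Implicit Defensive.
Import Order.TTheory GRing.Theory Num.Theory.
Local Open Scope ring_scope.
Local Open Scope classical_set_scope.

(* One FDC (index 1) and one RDC (index 0, unlimited inventory).  A decision in a
   period is the vector m1 : 'I_n -> nat of units shipped from the FDC; the
   RDC ships m0 i = Ot i - m1 i. *)

Section Model.
Variable R : realType.

Definition period_cost (f0 f1 : R) (n : nat) (c0 c1 : 'I_n -> R)
    (Ot m1 : 'I_n -> nat) : R :=
  f0 * (if [exists i, (0 < Ot i - m1 i)%N] then 1 else 0)
  + f1 * (if [exists i, (0 < m1 i)%N] then 1 else 0)
  + \sum_(i < n) (c0 i * ((Ot i - m1 i)%N)%:R + c1 i * (m1 i)%:R).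

Fixpoint plan_ok (n : nat) (inv : 'I_n -> nat) (os ms : seq ('I_n -> nat))
  : Prop :=
  match os, ms with
  | [::], [::] => True
  | Ot :: os', m :: ms' =>
      (forall i, (m i <= Ot i)%N /\ (m i <= inv i)%N)
      /\ plan_ok (fun i => inv i - m i)%N os' ms'
  | _, _ => False
  end.

Fixpoint plan_cost (f0 f1 : R) (n : nat) (c0 c1 : 'I_n -> R)
    (os ms : seq ('I_n -> nat)) : R :=
  match os, ms with
  | Ot :: os', m :: ms' => period_cost f0 f1 c0 c1 Ot m + plan_cost f0 f1 c0 c1 os' ms'
  | _, _ => 0
  end.

Definition OPT (f0 f1 : R) (n : nat) (I0 : 'I_n -> nat) (c0 c1 : 'I_n -> R)
    (os : seq ('I_n -> nat)) : R :=
  inf [set plan_cost f0 f1 c0 c1 os ms | ms in [set ms | plan_ok I0 os ms]].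

Definition history (n : nat) := seq (('I_n -> nat) * ('I_n -> nat)).

(* An online randomized policy (behavioral form): given the number of items,
   the initial inventories, the variable costs, the history of past orders and
   own past decisions, and the current order, it returns a finitely supported
   probability distribution over decisions, as a list of (probability,
   decision) pairs.  It does not see the horizon nor future orders.  The fixed
   costs f0 f1 are fixed throughout the theorem, so the policy may depend on
   them implicitly.  Deterministic policies are the special case of
   one-point distributions. *)
Definition policy :=
  forall n : nat, ('I_n -> nat) -> ('I_n -> R) -> ('I_n -> R) ->
    history n -> ('I_n -> nat) -> seq (R * ('I_n -> nat)).

Definition remaining (n : nat) (I0 : 'I_n -> nat) (h : history n) (i : 'I_n)
  : nat := (I0 i - \sum_(p <- h) p.2 i)%N.

Definition valid_policy (pol : policy) : Prop :=
  forall n I0 c0 c1 (h : history n) (Ot : 'I_n -> nat),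
    (forall pa, pa \in pol n I0 c0 c1 h Ot -> 0 <= pa.1) /\
    \sum_(pa <- pol n I0 c0 c1 h Ot) pa.1 = 1 /\
    (forall pa, pa \in pol n I0 c0 c1 h Ot ->
       forall i, (pa.2 i <= Ot i)%N /\ (pa.2 i <= remaining I0 h i)%N).

Fixpoint exp_cost (f0 f1 : R) (pol : policy) (n : nat) (I0 : 'I_n -> nat)
    (c0 c1 : 'I_n -> R) (h : history n) (os : seq ('I_n -> nat)) : R :=
  match os with
  | [::] => 0
  | Ot :: os' =>
      \sum_(pa <- pol n I0 c0 c1 h Ot)
        pa.1 * (period_cost f0 f1 c0 c1 Ot pa.2
                + exp_cost f0 f1 pol I0 c0 c1 (rcons h (Ot, pa.2)) os')
  end.

Definition ALG (f0 f1 : R) (pol : policy) (n : nat) (I0 : 'I_n -> nat)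
    (c0 c1 : 'I_n -> R) (os : seq ('I_n -> nat)) : R :=
  exp_cost f0 f1 pol I0 c0 c1 [::] os.

(* This is "sup_I ALG(I)/OPT(I) >= B"
   with the convention ALG/OPT = +oo when OPT = 0 < ALG. *)
Definition ratio_at_least (f0 f1 : R) (pol : policy) (B : R) : Prop :=
  forall r : R, r < B ->
    exists (n : nat) (I0 : 'I_n -> nat) (c0 c1 : 'I_n -> R)
           (os : seq ('I_n -> nat)),
      (forall i, 0 <= c0 i) /\ (forall i, 0 <= c1 i) /\
      r * OPT f0 f1 I0 c0 c1 os < ALG f0 f1 pol I0 c0 c1 os.

End Model.

(* Main.v *)
Require Import Defs.
From mathcomp Require Import all_boot all_order all_algebra.
From mathcomp Require Import boolp classical_sets reals.
From mathcomp Require Import lra zify.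
Import Order.TTheory GRing.Theory Num.Theory.
Local Open Scope ring_scope.

Section S.
Variable R : realType.

Lemma wavg (n : nat) (s : seq (R * ('I_n -> nat))) (F : R * ('I_n -> nat) -> R) (c : R) :
  (forall pa, pa \in s -> 0 <= pa.1) -> \sum_(pa <- s) pa.1 = 1 ->
  (forall pa, pa \in s -> c <= F pa) -> c <= \sum_(pa <- s) pa.1 * F pa.
Proof.
move=> h0 h1 hc.
have -> : c = \sum_(pa <- s) pa.1 * c by rewrite -mulr_suml h1 mul1r.
rewrite big_seq [X in _ <= X]big_seq; apply: ler_sum => pa hpa.
by apply: ler_wpM2l; [apply: h0 | apply: hc].
Qed.

Lemma remaining_rcons n (I0 : 'I_n -> nat) (h : history n) O m :
  remaining I0 (rcons h (O, m)) = (fun i => remaining I0 h i - m i)%N.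
Proof.
apply: funext => i; rewrite /remaining -cats1 big_cat big_seq1 /=.
by rewrite subnDA.
Qed.

Lemma bellman (f0 f1 : R) (pol : policy R) (hpol : valid_policy pol) n
  (I0 : 'I_n -> nat) c0 c1 (O : 'I_n -> nat) (G : ('I_n -> nat) -> nat -> R) :
  (forall inv, G inv 0 <= 0) ->
  (forall inv k m, (forall i, m i <= O i /\ m i <= inv i)%N ->
     G inv k.+1 <= period_cost f0 f1 c0 c1 O m + G (fun i => inv i - m i)%N k) ->
  forall k h, G (remaining I0 h) k <= exp_cost f0 f1 pol I0 c0 c1 h (nseq k O).
Proof.
move=> hG0 hG; elim=> [|k IH] h /=; first exact: hG0.
case: (hpol n I0 c0 c1 h O) => h0 [h1 hf].
apply: (@wavg _ _ (fun pa => period_cost f0 f1 c0 c1 O pa.2 + exp_cost f0 f1 pol I0 c0 c1 (rcons h (O, pa.2)) (nseq k O)) _ h0 h1) => pa hpa.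
apply: le_trans (hG _ _ pa.2 (hf pa hpa)) _.
by rewrite lerD2l -(@remaining_rcons n I0 h O); exact: IH.
Qed.

Lemma pc_ge0 (f0 f1 : R) n (c0 c1 : 'I_n -> R) O m :
  0 <= f0 -> 0 <= f1 -> (forall i, 0 <= c0 i) -> (forall i, 0 <= c1 i) ->
  0 <= period_cost f0 f1 c0 c1 O m.
Proof.
move=> h0 h1 hc0 hc1; rewrite /period_cost.
apply: addr_ge0; first by apply: addr_ge0; apply: mulr_ge0 => //; case: ifP.
by apply: sumr_ge0 => i _; apply: addr_ge0; apply: mulr_ge0.
Qed.

Lemma plan_cost_ge0 (f0 f1 : R) n (c0 c1 : 'I_n -> R) os ms :
  0 <= f0 -> 0 <= f1 -> (forall i, 0 <= c0 i) -> (forall i, 0 <= c1 i) ->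
  0 <= plan_cost f0 f1 c0 c1 os ms.
Proof.
move=> h0 h1 hc0 hc1; elim: os ms => [|O os IH] [|m ms] //=.
by apply: addr_ge0; [apply: pc_ge0|apply: IH].
Qed.

Lemma OPT_bounds (f0 f1 : R) n (I0 : 'I_n -> nat) (c0 c1 : 'I_n -> R) os ms :
  0 <= f0 -> 0 <= f1 -> (forall i, 0 <= c0 i) -> (forall i, 0 <= c1 i) ->
  plan_ok I0 os ms ->
  0 <= OPT f0 f1 I0 c0 c1 os /\ OPT f0 f1 I0 c0 c1 os <= plan_cost f0 f1 c0 c1 os ms.
Proof.
move=> h0 h1 hc0 hc1 hok; rewrite /OPT; split.
  apply: lb_le_inf; first by exists (plan_cost f0 f1 c0 c1 os ms), ms.
  by move=> x [ms' _ <-]; apply: plan_cost_ge0.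
apply: ge_inf; last by exists ms.
by exists 0 => x [ms' _ <-]; apply: plan_cost_ge0.
Qed.

Lemma plan_ok_nseq n (inv : 'I_n -> nat) (O : 'I_n -> nat) k :
  (forall i, O i * k <= inv i)%N -> plan_ok inv (nseq k O) (nseq k O).
Proof.
elim: k inv => [|k IH] inv hinv //=; split.
  by move=> i; split => //; apply: leq_trans (hinv i); rewrite mulnS leq_addr.
apply: IH => i; have := hinv i; rewrite mulnS; lia.
Qed.

Lemma plan_cost_nseq (f0 f1 : R) n (c0 c1 : 'I_n -> R) O k :
  plan_cost f0 f1 c0 c1 (nseq k O) (nseq k O) = k%:R * period_cost f0 f1 c0 c1 O O.
Proof.
elim: k => [|k IH] /=; first by rewrite mul0r.
by rewrite IH -nat1r mulrDl mul1r.
Qed.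

Lemma exists_ge N (F : 'I_N -> R) (A : R) : (0 < N)%N ->
  N%:R * A <= \sum_(j < N) F j -> exists j, A <= F j.
Proof.
move=> hN hs; case: (pselect (exists j, A <= F j)) => // hn; exfalso.
have hlt : forall j, F j < A.
  by move=> j; rewrite ltNge; apply/negP => h; apply: hn; exists j.
case: N hN F hs hn hlt => // N' _ F hs _ hlt.
have : \sum_(j < N'.+1) F j < N'.+1%:R * A.
  rewrite big_ord_recl -nat1r mulrDl mul1r; apply: ltr_leD; first exact: hlt.
  have -> : N'%:R * A = \sum_(j < N') A by rewrite sumr_const card_ord mulr_natl.
  by apply: ler_sum => j _; apply/ltW/hlt.
by rewrite ltNge hs.
Qed.

Lemma sum_cst N (c : R) : \sum_(j < N) c = N%:R * c.
Proof. by rewrite sumr_const card_ord mulr_natl. Qed.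

Lemma sum_ge2 n (F : 'I_n -> R) (y z : 'I_n) : (forall i, 0 <= F i) -> y != z ->
  F y + F z <= \sum_(i < n) F i.
Proof.
move=> h0 hyz; rewrite (bigD1 y) //= (bigD1 z) /=; last by rewrite eq_sym hyz.
by rewrite addrA lerDl; apply: sumr_ge0.
Qed.

Lemma sum_ge1 n (F : 'I_n -> R) (y : 'I_n) : (forall i, 0 <= F i) ->
  F y <= \sum_(i < n) F i.
Proof.
by move=> h0; rewrite (bigD1 y) //= lerDl; apply: sumr_ge0.
Qed.

Lemma ind_ge0 (x : R) (b : bool) : 0 <= x -> 0 <= x * (if b then 1 else 0).
Proof. by move=> hx; case: b; rewrite ?mulr1 ?mulr0. Qed.

Section Fam1.
Variables (f0 f1 a : R) (N q : nat).
Hypotheses (hf0 : 0 <= f0) (hf1 : 0 < f1) (ha : 0 < a).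

Definition n1 := N.+1.
Definition O1 : 'I_n1 -> nat := fun i => if i == ord0 then 1%N else q.
Definition I01 : 'I_n1 -> nat := fun i => if i == ord0 then q.+1 else q.
Definition c01 : 'I_n1 -> R := fun i => if i == ord0 then f1 else a.
Definition c11 : 'I_n1 -> R := fun _ => 0.
Definition Oj (x : 'I_n1) : 'I_n1 -> nat :=
  fun i => if (i == ord0) || (i == x) then 1%N else 0%N.

Lemma c01_ge0 i : 0 <= c01 i.
Proof. by rewrite /c01; case: ifP => _; [apply: ltW|apply: ltW]. Qed.

Lemma pc1_lb m : (forall i, m i <= O1 i)%N ->
  f1 + a * \sum_(j < N) (q - m (lift ord0 j))%:R <= period_cost f0 f1 c01 c11 O1 m.
Proof.
move=> hm; rewrite /period_cost big_ord_recl /c01 /c11 /O1 eqxx.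
have -> : \sum_(i < N) ((if lift ord0 i == ord0 then f1 else a) *
     ((if lift ord0 i == ord0 then 1%N else q) - m (lift ord0 i))%:R + 0 * (m (lift ord0 i))%:R)
   = a * \sum_(j < N) (q - m (lift ord0 j))%:R.
  rewrite mulr_sumr; apply: eq_bigr => j _.
  by rewrite eq_sym (negbTE (neq_lift _ _)) mul0r addr0.
have hm0 := hm ord0; rewrite /O1 eqxx in hm0.
have hA := @ind_ge0 f0 [exists i, (0 < (if i == ord0 then 1%N else q) - m i)%N] hf0.
case hm0v : (m ord0) => [|k].
  rewrite subn0 mul0r addr0 mulr1.
  have hB := @ind_ge0 f1 [exists i, (0 < m i)%N] (ltW hf1).
  by rewrite lerDr; apply: addr_ge0.
have k0 : k = 0%N by move: hm0; rewrite hm0v ltnS leqn0 => /eqP.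
subst k.
have -> : [exists i, (0 < m i)%N] by apply/existsP; exists ord0; rewrite hm0v.
rewrite subnn mulr0 mul0r !add0r mulr1.
by rewrite -addrA lerDr.
Qed.


Lemma Fnn (x : 'I_n1) m i : 0 <= c01 i * (Oj x i - m i)%:R + c11 i * (m i)%:R.
Proof. by rewrite /c11 mul0r addr0; apply: mulr_ge0 => //; apply: c01_ge0. Qed.

Lemma pcj_lb x m : x != ord0 -> (forall i, m i <= Oj x i)%N ->
  f1 + (f0 + a) * (if m x == 0%N then 1 else 0) <= period_cost f0 f1 c01 c11 (Oj x) m.
Proof.
move=> hx hm; rewrite /period_cost.
have hs0 := @sum_ge1 n1 _ x (Fnn x m).
have hOx : Oj x x = 1%N by rewrite /Oj eqxx orbT.
have hO0 : Oj x ord0 = 1%N by rewrite /Oj eqxx.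
have hcx : c01 x = a by rewrite /c01 (negbTE hx).
have hc0 : c01 ord0 = f1 by rewrite /c01 eqxx.
case: eqP => hmx.
  have -> : [exists i, (0 < Oj x i - m i)%N] by apply/existsP; exists x; rewrite hOx hmx.
  have hm0 := hm ord0; rewrite hO0 in hm0.
  case hm0v : (m ord0) => [|k].
    have hs := @sum_ge2 n1 _ ord0 x (Fnn x m); rewrite eq_sym in hs.
    have {}hs := hs hx.
    rewrite /c11 hc0 hcx hOx hO0 hmx hm0v !mul0r !addr0 subn0 !mulr1 in hs.
    have hB := @ind_ge0 f1 [exists i, (0 < m i)%N] (ltW hf1).
    rewrite mulr1; lra.
  have -> : [exists i, (0 < m i)%N] by apply/existsP; exists ord0; rewrite hm0v.
  rewrite /c11 hcx hOx hmx !mul0r addr0 subn0 mulr1 in hs0.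
  rewrite !mulr1; lra.
have -> : [exists i, (0 < m i)%N] by apply/existsP; exists x; rewrite lt0n; apply/eqP.
have hA := @ind_ge0 f0 [exists i, (0 < Oj x i - m i)%N] hf0.
have hs : 0 <= \sum_(i < n1) (c01 i * (Oj x i - m i)%:R + c11 i * (m i)%:R).
  by apply: sumr_ge0 => i _; apply: Fnn.
rewrite mulr0 mulr1 addr0; lra.
Qed.


Definition Gj (x : 'I_n1) (inv : 'I_n1 -> nat) (k : nat) : R :=
  k%:R * f1 + (f0 + a) * (k - inv x)%:R.

Lemma Gj_step x inv k m : x != ord0 -> (forall i, m i <= Oj x i /\ m i <= inv i)%N ->
  Gj x inv k.+1 <= period_cost f0 f1 c01 c11 (Oj x) m + Gj x (fun i => inv i - m i)%N k.
Proof.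
move=> hx hm; have hp := pcj_lb x m hx (fun i => (hm i).1).
rewrite /Gj mulrSr.
have [hmx1 hmx2] := hm x; rewrite /Oj eqxx orbT in hmx1.
move: hp; case: eqP => hmx hp.
  rewrite hmx subn0.
  have : ((k.+1 - inv x)%:R <= (k - inv x)%:R + 1 :> R).
    by rewrite natr1 ler_nat; lia.
  rewrite mulr1 in hp; move=> hle.
  have hfa : 0 <= f0 + a by apply: addr_ge0 => //; apply: ltW.
  have := ler_wpM2l hfa hle; rewrite mulrDr mulr1 => hle2.
  lra.
have -> : (k.+1 - inv x = k - (inv x - m x))%N by lia.
rewrite mulr0 addr0 in hp; lra.
Qed.

Lemma fam1_main (pol : policy R) (hpol : valid_policy pol) :
  (0 < N)%N -> f0 + a <= N%:R * a ->
  exists j : 'I_N, f1 + q%:R * (f1 + f0 + a) <=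
     ALG f0 f1 pol I01 c01 c11 (O1 :: nseq q (Oj (lift ord0 j))).
Proof.
move=> hN hNa; apply: exists_ge hN _.
rewrite /ALG /= exchange_big /=.
case: (hpol n1 I01 c01 c11 [::] O1) => h0 [h1 hf].
rewrite (eq_bigr (fun pa => pa.1 * \sum_(j < N) (period_cost f0 f1 c01 c11 O1 pa.2 +
   exp_cost f0 f1 pol I01 c01 c11 (rcons [::] (O1, pa.2)) (nseq q (Oj (lift ord0 j))))));
  last by move=> pa _; rewrite mulr_sumr.
apply: (@wavg _ _ (fun pa => \sum_(j < N) (period_cost f0 f1 c01 c11 O1 pa.2 +
   exp_cost f0 f1 pol I01 c01 c11 (rcons [::] (O1, pa.2)) (nseq q (Oj (lift ord0 j))))) _ h0 h1)
  => pa hpa /=.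
have hm := hf pa hpa.
have hpc := pc1_lb pa.2 (fun i => (hm i).1).
have hE : forall j : 'I_N, q%:R * f1 + (f0 + a) * (pa.2 (lift ord0 j))%:R <=
   exp_cost f0 f1 pol I01 c01 c11 (rcons [::] (O1, pa.2)) (nseq q (Oj (lift ord0 j))).
  move=> j.
  have hx : lift ord0 j != ord0 by rewrite eq_sym neq_lift.
  have hG0 : forall inv, Gj (lift ord0 j) inv 0 <= 0.
    by move=> inv; rewrite /Gj sub0n mul0r add0r mulr0.
  have hGs : forall inv k m, (forall i, m i <= Oj (lift ord0 j) i /\ m i <= inv i)%N ->
     Gj (lift ord0 j) inv k.+1 <= period_cost f0 f1 c01 c11 (Oj (lift ord0 j)) m
        + Gj (lift ord0 j) (fun i => inv i - m i)%N k.
    by move=> inv k m hm'; apply: Gj_step.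
  have hb := @bellman f0 f1 pol hpol n1 I01 c01 c11 (Oj (lift ord0 j)) (Gj (lift ord0 j))
            hG0 hGs q (rcons [::] (O1, pa.2)).
  apply: (le_trans _ hb).
  rewrite remaining_rcons /Gj /remaining big_nil /I01 (negbTE hx) subn0.
  have := (hm (lift ord0 j)).1; rewrite /O1 (negbTE hx) => hle.
  by have -> : (q - (q - pa.2 (lift ord0 j)) = pa.2 (lift ord0 j))%N by lia.
apply: le_trans (ler_sum _ (fun j _ => lerD hpc (hE j))).
rewrite big_split /= sum_cst.
set u := fun j : 'I_N => ((q - pa.2 (lift ord0 j))%N%:R : R).
have key : \sum_(j < N) (q%:R * (f0 + a)) <=
    \sum_(j < N) (N%:R * a * u j + (f0 + a) * (pa.2 (lift ord0 j))%:R).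
  apply: ler_sum => j _.
  have hle := (hm (lift ord0 j)).1.
  rewrite /O1 eq_sym (negbTE (neq_lift _ _)) in hle.
  have hq : q%:R = u j + (pa.2 (lift ord0 j))%:R :> R by rewrite /u -natrD subnK.
  have hu : 0 <= u j by rewrite /u.
  have := ler_wpM2r hu hNa.
  rewrite hq; lra.
rewrite big_split /= -mulr_sumr sum_cst in key.
have hs2 : \sum_(j < N) (q%:R * f1 + (f0 + a) * (pa.2 (lift ord0 j))%:R) =
   N%:R * (q%:R * f1) + \sum_(j < N) ((f0 + a) * (pa.2 (lift ord0 j))%:R).
  by rewrite big_split /= sum_cst.
rewrite hs2.
have -> : \sum_(j < N) (q - pa.2 (lift ord0 j))%:R = \sum_(j < N) u j by [].
have hsu : \sum_(i < N) N%:R * a * u i = N%:R * a * \sum_(j < N) u j by rewrite mulr_sumr.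
rewrite hsu in key.
nra.
Qed.


Lemma ind_le (x : R) (b : bool) : 0 <= x -> x * (if b then 1 else 0) <= x.
Proof. by move=> hx; case: b; rewrite ?mulr1 ?mulr0. Qed.

Lemma sum_single n (F : 'I_n -> R) (x : 'I_n) : (forall i, i != x -> F i = 0) ->
  \sum_(i < n) F i = F x.
Proof. by move=> h; rewrite (bigD1 x) //= big1 ?addr0 // => i /h. Qed.

Definition O2a (x : 'I_n1) : 'I_n1 -> nat := fun i => if i == x then 1%N else 0%N.

Lemma FnnO (O m : 'I_n1 -> nat) i : 0 <= c01 i * (O i - m i)%:R + c11 i * (m i)%:R.
Proof. by rewrite /c11 mul0r addr0; apply: mulr_ge0 => //; apply: c01_ge0. Qed.

Lemma pc2a_lb x m : x != ord0 -> a = f1 *+ 2 - f0 -> (forall i, m i <= O2a x i)%N ->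
  f1 *+ 2 - f1 * (m x)%:R <= period_cost f0 f1 c01 c11 (O2a x) m.
Proof.
move=> hx hav hm; rewrite /period_cost.
have hs0 := @sum_ge1 n1 _ x (FnnO (O2a x) m).
have hs : 0 <= \sum_(i < n1) (c01 i * (O2a x i - m i)%:R + c11 i * (m i)%:R).
  by apply: sumr_ge0 => i _; apply: FnnO.
have hOx : O2a x x = 1%N by rewrite /O2a eqxx.
have hcx : c01 x = a by rewrite /c01 (negbTE hx).
have hmx := hm x; rewrite hOx in hmx.
have hA := @ind_ge0 f0 [exists i, (0 < O2a x i - m i)%N] hf0.
have hB := @ind_ge0 f1 [exists i, (0 < m i)%N] (ltW hf1).
case hmv : (m x) => [|k].
  have -> : [exists i, (0 < O2a x i - m i)%N] by apply/existsP; exists x; rewrite hOx hmv.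
  rewrite /c11 hcx hOx hmv mul0r addr0 subn0 mulr1 in hs0.
  rewrite mulr0 subr0 mulr1 mulr2n; lra.
have k0 : k = 0%N by move: hmx; rewrite hmv ltnS leqn0 => /eqP.
subst k.
have -> : [exists i, (0 < m i)%N] by apply/existsP; exists x; rewrite hmv.
rewrite mulr1 mulr2n; lra.
Qed.

Lemma wlin n (s : seq (R * ('I_n -> nat))) (al be : R) (g : R * ('I_n -> nat) -> R) :
  \sum_(pa <- s) pa.1 = 1 ->
  \sum_(pa <- s) pa.1 * (al + be * g pa) = al + be * \sum_(pa <- s) pa.1 * g pa.
Proof.
move=> h1; rewrite (eq_bigr (fun pa => al * pa.1 + be * (pa.1 * g pa))); last first.
  by move=> pa _; rewrite mulrDr mulrCA (mulrC pa.1).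
by rewrite big_split /= -!mulr_sumr h1 mulr1.
Qed.

Lemma wmono n (s : seq (R * ('I_n -> nat))) (F H : R * ('I_n -> nat) -> R) :
  (forall pa, pa \in s -> 0 <= pa.1) -> (forall pa, pa \in s -> F pa <= H pa) ->
  \sum_(pa <- s) pa.1 * F pa <= \sum_(pa <- s) pa.1 * H pa.
Proof.
move=> h0 h; rewrite big_seq [X in _ <= X]big_seq; apply: ler_sum => pa hpa.
by apply: ler_wpM2l; [apply: h0 | apply: h].
Qed.

Lemma fam2_main (pol : policy R) (hpol : valid_policy pol) x :
  x != ord0 -> a = f1 *+ 2 - f0 -> q = 1%N ->
  let P := \sum_(pa <- pol n1 I01 c01 c11 [::] (O2a x)) pa.1 * (pa.2 x)%:R in
  f1 *+ 2 + (- f1) * P <= ALG f0 f1 pol I01 c01 c11 [:: O2a x] /\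
  f1 *+ 3 + f1 * P <= ALG f0 f1 pol I01 c01 c11 [:: O2a x; Oj x].
Proof.
move=> hx hav hq P; rewrite /ALG /=.
case: (hpol n1 I01 c01 c11 [::] (O2a x)) => h0 [h1 hf].
split.
  rewrite /P -(@wlin _ _ _ _ (fun pa => (pa.2 x)%:R) h1).
  apply: wmono => // pa hpa; rewrite addr0 mulNr.
  exact: pc2a_lb x pa.2 hx hav (fun i => (hf pa hpa i).1).
rewrite /P -(@wlin _ _ _ _ (fun pa => (pa.2 x)%:R) h1).
apply: wmono => // pa hpa.
have hpc := pc2a_lb x pa.2 hx hav (fun i => (hf pa hpa i).1).
have hG0 : forall inv, Gj x inv 0 <= 0.
  by move=> inv; rewrite /Gj sub0n mul0r add0r mulr0.
have hGs : forall inv k m, (forall i, m i <= Oj x i /\ m i <= inv i)%N ->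
   Gj x inv k.+1 <= period_cost f0 f1 c01 c11 (Oj x) m + Gj x (fun i => inv i - m i)%N k.
  by move=> inv k m hm'; apply: Gj_step.
have hb := @bellman f0 f1 pol hpol n1 I01 c01 c11 (Oj x) (Gj x) hG0 hGs 1 (rcons [::] (O2a x, pa.2)).
move: hb; rewrite remaining_rcons /Gj /remaining big_nil /I01 (negbTE hx) subn0 hq /=.
have hmx := (hf pa hpa x).1; rewrite /O2a eqxx in hmx.
rewrite subKn //.
rewrite hav in hpc *; rewrite -[f1 *+ 3]mulr_natl -[f1 *+ 2]mulr_natl in hpc * => hb.
rewrite mul1r in hb. lra.
Qed.

Lemma pc_full (O : 'I_n1 -> nat) : period_cost f0 f1 c01 c11 O O <= f1.
Proof.
rewrite /period_cost.
have -> : [exists i, (0 < O i - O i)%N] = false.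
  by apply/existsP => -[i]; rewrite subnn.
rewrite big1 ?mulr0 ?add0r ?addr0; last by move=> i _; rewrite subnn /c11 !mul0r mulr0 addr0.
exact: ind_le (ltW hf1).
Qed.

Lemma pc_ub (O m : 'I_n1 -> nat) : period_cost f0 f1 c01 c11 O m <=
  f0 + f1 + \sum_(i < n1) (c01 i * (O i - m i)%:R + c11 i * (m i)%:R).
Proof.
rewrite /period_cost lerD2r; apply: lerD; [exact: ind_le | exact: ind_le (ltW hf1)].
Qed.

Lemma opt1 x : x != ord0 ->
  let m1 : 'I_n1 -> nat := fun i => if i == ord0 then 1%N else if i == x then 0%N else q in
  plan_ok I01 (O1 :: nseq q (Oj x)) (m1 :: nseq q (Oj x)) /\
  plan_cost f0 f1 c01 c11 (O1 :: nseq q (Oj x)) (m1 :: nseq q (Oj x))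
    <= f0 + f1 + a * q%:R + q%:R * f1.
Proof.
move=> hx m1; split.
  split.
    move=> i; rewrite /m1 /O1 /I01; case: (i == ord0) => //; case: (i == x) => //.
  apply: plan_ok_nseq => i; rewrite /Oj /m1 /I01.
  case: (i =P ord0) => [_|hi] /=; first by rewrite mul1n subn1.
  case: (i =P x) => [_|hix] /=; first by rewrite mul1n subn0.
  by rewrite mul0n.
rewrite /= plan_cost_nseq.
have h2 : q%:R * period_cost f0 f1 c01 c11 (Oj x) (Oj x) <= q%:R * f1.
  by apply: ler_wpM2l => //; apply: pc_full.
suff : period_cost f0 f1 c01 c11 O1 m1 <= f0 + f1 + a * q%:R by lra.
apply: le_trans (pc_ub _ _) _; rewrite lerD2l.
rewrite (@sum_single n1 _ x); last first.
  move=> i hix; rewrite /c11 /O1 /m1 (negbTE hix) mul0r addr0.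
  by case: (i == ord0); rewrite subnn mulr0.
by rewrite /c11 /c01 /O1 /m1 (negbTE hx) eqxx subn0 mul0r addr0.
Qed.

Lemma opt2s x : x != ord0 -> (1 <= q)%N ->
  plan_ok I01 [:: O2a x] [:: O2a x] /\
  plan_cost f0 f1 c01 c11 [:: O2a x] [:: O2a x] <= f1.
Proof.
move=> hx hq; split.
  split => //; move=> i; rewrite /O2a /I01; case: (i =P x) => [->|] //.
  by rewrite (negbTE hx).
by rewrite /= addr0; apply: pc_full.
Qed.

Lemma opt2c x : x != ord0 -> (1 <= q)%N ->
  plan_ok I01 [:: O2a x; Oj x] [:: (fun _ => 0%N); Oj x] /\
  plan_cost f0 f1 c01 c11 [:: O2a x; Oj x] [:: (fun _ => 0%N); Oj x] <= f0 + a + f1.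
Proof.
move=> hx hq; split.
  split; first by move=> i.
  split => //; move=> i; split => //; rewrite /Oj /I01 subn0.
  by case: (i == ord0) => //; case: (i == x).
rewrite /= addr0.
have h2 := pc_full (Oj x).
suff : period_cost f0 f1 c01 c11 (O2a x) (fun _ => 0%N) <= f0 + a by lra.
rewrite /period_cost.
have -> : [exists i, (0 < (fun _ : 'I_n1 => 0%N) i)%N] = false.
  by apply/existsP => -[i].
rewrite (@sum_single n1 _ x); last first.
  by move=> i hix; rewrite /c11 /O2a (negbTE hix) mul0r addr0 mulr0.
rewrite /c11 /c01 /O2a (negbTE hx) eqxx subn0 mul0r addr0 mulr0 addr0 mulr1.
by rewrite lerD2r; apply: ind_le.
Qed.

End Fam1.
End S.

Definition good_inst {R : realType} (f0 f1 : R) (pol : policy R) (r : R) :=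
  exists (n : nat) (I0 : 'I_n -> nat) (c0 c1 : 'I_n -> R) (os : seq ('I_n -> nat)) ms (U : R),
    (forall i, 0 <= c0 i) /\ (forall i, 0 <= c1 i) /\ plan_ok I0 os ms /\
    plan_cost f0 f1 c0 c1 os ms <= U /\ r * U < ALG f0 f1 pol I0 c0 c1 os.

Lemma key1 (R : realType) (f0 f1 : R) (hf0 : 0 <= f0) (hf1 : 0 < f1)
    (pol : policy R) (hpol : valid_policy pol) (r : R) :
  0 <= r -> r < 1 + f0 / f1 -> good_inst f0 f1 pol r.
Proof.
move=> hr hrB.
have hd : 0 < f1 + f0 - r * f1.
  have : r * f1 < (1 + f0 / f1) * f1 by rewrite ltr_pM2r.
  rewrite mulrDl mul1r divfK ?gt_eqF //; lra.
set d := f1 + f0 - r * f1 in hd.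
set a := d / (2 * (r + 1)).
have hr1 : 0 < 2 * (r + 1) by lra.
have ha : 0 < a by apply: divr_gt0.
have had : a * (2 * (r + 1)) = d by rewrite /a divfK ?gt_eqF.
set q := (Num.truncn (2 * r * (f0 + f1) / d)).+1.
have hq : 2 * r * (f0 + f1) < q%:R * d.
  by rewrite -ltr_pdivrMr //; apply: truncnS_gt.
set N := (Num.truncn ((f0 + a) / a)).+1.
have hN : f0 + a <= N%:R * a.
  by apply/ltW; rewrite -ltr_pdivrMr //; apply: truncnS_gt.
have [j hj] := @fam1_main R f0 f1 a N q hf0 hf1 ha pol hpol (ltn0Sn _) hN.
have hx : lift ord0 j != ord0 by rewrite eq_sym neq_lift.
have [hok hcost] := @opt1 R f0 f1 a N q hf0 hf1 _ hx.
eexists _, _, _, _, _, _, _; split; last split; last split; [| |exact: hok|split; [exact: hcost|]].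
- by move=> i; apply: c01_ge0 => //; apply: ltW.
- by move=> i; rewrite /c11.
apply: lt_le_trans hj.
have hq0 : 0 <= q%:R :> R by [].
have har : q%:R * (a * r) <= q%:R * (d / 2).
  by apply: ler_wpM2l => //; nra.
rewrite /d in hq har.
nra.
Qed.

Lemma key2 (R : realType) (f0 f1 : R) (hf0 : 0 <= f0) (hf1 : 0 < f1)
    (pol : policy R) (hpol : valid_policy pol) (r : R) :
  0 <= r -> 1 + f0 / f1 <= r -> r < 5 / 4 -> good_inst f0 f1 pol r.
Proof.
move=> hr hrl hrB.
have hf0f1 : f0 < f1.
  have : f0 / f1 < 1 by lra.
  by rewrite ltr_pdivrMr // mul1r.
set a := f1 *+ 2 - f0.
have ha : 0 < a by rewrite /a mulr2n; lra.
have hav : a = f1 *+ 2 - f0 by [].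
set x : 'I_2 := lift ord0 ord0.
have hx : x != ord0 by rewrite eq_sym neq_lift.
have H := @fam2_main R f0 f1 a 1 1 hf0 hf1 ha pol hpol x hx hav erefl.
move: H; cbv zeta.
set P := \sum_(pa <- _) _.
case=> hs hc.
case: (leP (2 - P) r) => hP.
  have [hok hcost] := @opt2c R f0 f1 a 1 1 hf0 hf1 x hx (leqnn 1).
  eexists _, _, _, _, _, _, _; split; last split; last split; [| |exact: hok|split; [exact: hcost|]].
  - by move=> i; apply: c01_ge0 => //; apply: ltW.
  - by move=> i; rewrite /c11.
  apply: lt_le_trans hc.
  rewrite /a !mulr2n -[f1 *+ 3]mulr_natl.
  nra.
have [hok hcost] := @opt2s R f0 f1 a 1 1 hf1 x hx (leqnn 1).
eexists _, _, _, _, _, _, _; split; last split; last split; [| |exact: hok|split; [exact: hcost|]].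
- by move=> i; apply: c01_ge0 => //; apply: ltW.
- by move=> i; rewrite /c11.
apply: lt_le_trans hs.
rewrite mulr2n; nra.
Qed.

Theorem theorem9 (R : realType) (f0 f1 : R) (hf0 : 0 <= f0) (hf1 : 0 < f1)
    (pol : policy R) (hpol : valid_policy pol) :
  ratio_at_least f0 f1 pol (Num.max (1 + f0 / f1) (5 / 4)).
Proof.
move=> r hr.
set r' := Num.max r 0.
have hr'0 : 0 <= r' by rewrite le_max lexx orbT.
have hrr' : r <= r' by rewrite le_max lexx.
set B := Num.max (1 + f0 / f1) (5 / 4) in hr *.
have hB0 : 0 < B by rewrite /B lt_max; apply/orP; right; lra.
have hr'B : r' < B by rewrite /r' gt_max hr hB0.
have hg : good_inst f0 f1 pol r'.
  case: (ltP r' (1 + f0 / f1)) => h'; first exact: key1.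
  apply: key2 => //; move: hr'B; rewrite /B lt_max => /orP [h|h] //.
  by move: h'; rewrite leNgt h.
case: hg => n [I0 [c0 [c1 [os [ms [U [hc0 [hc1 [hok [hU hlt]]]]]]]]]].
exists n, I0, c0, c1, os; split => //; split => //.
have [hO0 hO1] := @OPT_bounds R f0 f1 n I0 c0 c1 os ms hf0 (ltW hf1) hc0 hc1 hok.
apply: le_lt_trans hlt.
apply: (@le_trans _ _ (r' * OPT f0 f1 I0 c0 c1 os)); first exact: ler_wpM2r.
by apply: ler_wpM2l => //; apply: le_trans hU.
Qed.
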